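(* For every integer $j\ge 0$, $$\int_0^1\frac{\operatorname{Ti}_{2j+1}(t)}{1+t^2}\,dt=\frac12\sum_{k=0}^{2j}(-1)^k\,\beta(k+1)\,\beta(2j-k+1).$$
   Context: The inverse tangent integral of order $r\ge1$ is $\operatorname{Ti}_r(x)=\sum_{k=1}^\infty\frac{(-1)^{k-1}x^{2k-1}}{(2k-1)^r}$ for $|x|\le 1$. The Dirichlet beta function is $\beta(r)=\sum_{k=1}^\infty \frac{(-1)^{k-1}}{(2k-1)^r}=\operatorname{Ti}_r(1)$ for integers $r\ge1$. *)

(* Defs.v *)
From Stdlib Require Import Reals.
From Coquelicot Require Import Coquelicot.
Open Scope R_scope.

(* Inverse tangent integral of order r:
   Ti_r(x) = sum_{k>=1} (-1)^(k-1) x^(2k-1) / (2k-1)^r, reindexed with n = k-1. *)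
Definition Ti (r : nat) (x : R) : R :=
  Series (fun n : nat => (-1) ^ n * x ^ (2 * n + 1) / (INR (2 * n + 1)) ^ r).

Definition dbeta (r : nat) : R :=
  Series (fun n : nat => (-1) ^ n / (INR (2 * n + 1)) ^ r).

(* Main.v *)
Require Import Defs.
From Stdlib Require Import Reals Lra Lia.
From Coquelicot Require Import Coquelicot.
Open Scope R_scope.

Definition d (a n : nat) : R := (-1) ^ n / (INR (2 * n + 1)) ^ a.
Definition P (a : nat) (u : R) : R := PSeries (d a) u.

Lemma INR_odd_ge1 n : 1 <= INR (2 * n + 1).
Proof. rewrite plus_INR, mult_INR. simpl. pose proof (pos_INR n). lra. Qed.

Lemma d_bound a n : Rabs (d a n) <= 1.
Proof.
  unfold d, Rdiv. rewrite Rabs_mult, pow_1_abs, Rmult_1_l.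
  pose proof (pow_R1_Rle _ a (INR_odd_ge1 n)).
  rewrite Rabs_inv, Rabs_pos_eq by lra.
  rewrite <- Rinv_1. apply Rinv_le_contravar; lra.
Qed.

Lemma radius a : Rbar_le 1 (CV_radius (d a)).
Proof.
  destruct (CV_radius_bounded (d a)) as [Hub _]. apply Hub.
  exists 1. intro n. rewrite pow1, Rmult_1_r. apply d_bound.
Qed.

Lemma rad_lt a u : Rabs u < 1 -> Rbar_lt (Rabs u) (CV_radius (d a)).
Proof. intro H. eapply Rbar_lt_le_trans; [|apply radius]. exact H. Qed.

Lemma ex_P a u : Rabs u < 1 -> ex_pseries (d a) u.
Proof. intro H. apply CV_radius_inside, rad_lt, H. Qed.

Lemma Ti_P a t : Ti a t = t * P a (t ^ 2).
Proof.
  unfold Ti, P, PSeries. rewrite <- Series_scal_l. apply Series_ext; intro n.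
  unfold d. rewrite <- pow_mult, pow_add, pow_1. field.
  apply pow_nonzero. pose proof (INR_odd_ge1 n). lra.
Qed.

Lemma P0_eq u : Rabs u < 1 -> P 0 u * (1 + u) = 1.
Proof.
  intro H. unfold P.
  assert (E: d 0 0 = 1) by (unfold d; simpl; field).
  set (p := PSeries (d 0) u).
  assert (Hp : p = 1 + u * - p).
  { unfold p. rewrite (PSeries_decr_1 _ _ (ex_P 0 u H)) at 1.
    rewrite (PSeries_ext (PS_decr_1 (d 0)) (PS_opp (d 0))).
    2:{ intro n. unfold PS_decr_1, PS_opp, d. simpl. unfold opp; simpl. field. }
    rewrite PSeries_opp, E. reflexivity. }
  nra.
Qed.

Lemma key a u : Rabs u < 1 ->
  P (S a) u + 2 * u * PSeries (PS_derive (d (S a))) u = P a u.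
Proof.
  intro H. unfold P.
  rewrite Rmult_assoc, <- PSeries_incr_1, <- PSeries_scal.
  rewrite <- PSeries_plus.
  2: apply ex_P, H.
  2:{ apply ex_pseries_scal. apply Rmult_comm. apply ex_pseries_incr_1.
      apply ex_pseries_derive, rad_lt, H. }
  apply PSeries_ext. intros [|m].
  - unfold PS_plus, PS_scal, PS_incr_1, d. simpl. unfold plus, scal, zero; simpl.
    unfold mult; simpl. field. apply pow_nonzero; lra.
  - unfold PS_plus, PS_scal, PS_incr_1, PS_derive, d.
    assert (N1 : INR (2 * S m + 1) = 2 * INR (S m) + 1)
      by (rewrite plus_INR, mult_INR; simpl; ring).
    rewrite N1. assert (Hn : 2 * INR (S m) + 1 <> 0) by (pose proof (pos_INR (S m)); lra).
    set (k := INR (S m)) in *.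
    unfold plus, scal; simpl. unfold mult; simpl.
    field. split; [apply pow_nonzero; exact Hn | exact Hn].
Qed.

Lemma t2_lt t : Rabs t < 1 -> Rabs (t ^ 2) < 1.
Proof.
  intro H. rewrite <- RPow_abs. pose proof (Rabs_pos t).
  simpl. nra.
Qed.

Lemma is_derive_val (f : R -> R) x l l' : is_derive f x l -> l = l' -> is_derive f x l'.
Proof. intros H ->; exact H. Qed.

Lemma der_Ti a t : Rabs t < 1 -> is_derive (Ti (S a)) t (P a (t ^ 2)).
Proof.
  intro H.
  apply is_derive_ext with (f := fun t => t * P (S a) (t ^ 2)).
  { intro s. symmetry. apply Ti_P. }
  assert (H2 := t2_lt t H).
  assert (Dp : is_derive (fun s => P (S a) (s ^ 2)) t
                 (2 * t * PSeries (PS_derive (d (S a))) (t ^ 2))).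
  { apply (is_derive_comp (P (S a)) (fun s => s ^ 2)).
    - apply is_derive_PSeries, rad_lt, H2.
    - apply is_derive_Reals. replace (2 * t) with (INR 2 * t ^ (2 - 1)) by (simpl; ring).
      apply derivable_pt_lim_pow. }
  pose proof (is_derive_mult (fun s => s) (fun s => P (S a) (s ^ 2)) t 1 _
                (is_derive_id t) Dp Rmult_comm) as M.
  rewrite <- (key a (t^2) H2).
  eapply is_derive_val; [exact M|]. unfold plus, mult; simpl. ring.
Qed.

Lemma der_sum (fk : nat -> R -> R) (dk : nat -> R) m y :
  (forall k, (k <= m)%nat -> is_derive (fk k) y (dk k)) ->
  is_derive (fun y => sum_f_R0 (fun k => fk k y) m) y (sum_f_R0 dk m).
Proof.
  induction m as [|m IH]; intro H.
  - simpl. apply H. lia.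
  - simpl. apply (is_derive_plus (fun y => sum_f_R0 (fun k => fk k y) m) (fk (S m))).
    + apply IH. intros k Hk. apply H. lia.
    + apply H. lia.
Qed.

Lemma telescope (A : nat -> R) m :
  sum_f_R0 (fun k => (-1) ^ k * (A k + A (S k))) m = A 0%nat + (-1) ^ m * A (S m).
Proof.
  induction m as [|m IH]; simpl.
  - ring.
  - rewrite IH. ring.
Qed.

Lemma sum_scal_l c (f : nat -> R) m : sum_f_R0 (fun k => c * f k) m = c * sum_f_R0 f m.
Proof. induction m; simpl; [ring| rewrite IHm; ring]. Qed.

Definition Fj (j : nat) (y : R) : R :=
  / 2 * sum_f_R0 (fun k => (-1) ^ k * Ti (k + 1) y * Ti (2 * j - k + 1) y) (2 * j).

Definition Q a y := P a (y ^ 2).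

Lemma der_F j y : Rabs y < 1 -> is_derive (Fj j) y (Ti (2 * j + 1) y / (1 + y ^ 2)).
Proof.
  intro H. unfold Fj.
  set (dk := fun k => (-1) ^ k * (Q k y * Ti (2 * j - k + 1) y + Ti (k + 1) y * Q (2 * j - k) y)).
  eapply is_derive_val.
  { apply is_derive_scal.
    apply (der_sum (fun k y => (-1) ^ k * Ti (k + 1) y * Ti (2 * j - k + 1) y) dk).
    intros k Hk.
    assert (D1 : is_derive (Ti (k + 1)) y (Q k y)).
    { replace (k + 1)%nat with (S k) by lia. apply der_Ti, H. }
    assert (D2 : is_derive (Ti (2 * j - k + 1)) y (Q (2 * j - k) y)).
    { replace (2 * j - k + 1)%nat with (S (2 * j - k)) by lia. apply der_Ti, H. }
    eapply is_derive_val.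
    { apply (is_derive_mult (fun y => (-1) ^ k * Ti (k + 1) y) (Ti (2 * j - k + 1))).
      - apply is_derive_scal. exact D1.
      - exact D2.
      - apply Rmult_comm. }
    unfold dk, plus, mult; simpl. ring. }
  set (A := fun k => Q k y * Q (2 * j + 1 - k) y).
  rewrite (sum_eq dk (fun k => y * ((-1) ^ k * (A k + A (S k))))).
  2:{ intros k Hk. unfold dk, A. rewrite !Ti_P. fold (Q (2*j-k+1) y). fold (Q (k+1) y).
      replace (2 * j - k + 1)%nat with (2 * j + 1 - k)%nat by lia.
      replace (2 * j - k)%nat with (2 * j + 1 - S k)%nat by lia.
      replace (k + 1)%nat with (S k) by lia. ring. }
  rewrite sum_scal_l, telescope, pow_1_even. unfold A.
  replace (2 * j + 1 - 0)%nat with (2 * j + 1)%nat by lia.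
  replace (2 * j + 1 - S (2 * j))%nat with 0%nat by lia.
  replace (S (2 * j)) with (2 * j + 1)%nat by lia.
  rewrite Ti_P. unfold Q. pose proof (P0_eq (y ^ 2) (t2_lt y H)).
  assert (1 + y ^ 2 <> 0) by (pose proof (pow2_ge_0 y); lra).
  assert (E : P 0 (y ^ 2) = / (1 + y ^ 2)).
  { apply (Rmult_eq_reg_r (1 + y ^ 2)); [| assumption]. rewrite H0. field. assumption. }
  rewrite E. match goal with |- ?a = ?b => change (@eq R a b) end. field. assumption.
Qed.

Lemma alt_bound U l n : Un_decreasing U -> Un_cv U 0 ->
  Un_cv (fun N => sum_f_R0 (tg_alt U) N) l ->
  Rabs (l - sum_f_R0 (tg_alt U) n) <= U (S n).
Proof.
  intros Hd Hc Hl.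
  destruct (Nat.Even_or_Odd n) as [[m Hm]|[m Hm]]; subst n.
  - pose proof (alternated_series_ineq U l m Hd Hc Hl) as [H1 H2].
    rewrite tech5 in H1.
    replace (tg_alt U (S (2 * m))) with (- U (S (2 * m))) in H1 by (unfold tg_alt; rewrite pow_1_odd; ring).
    apply Rabs_le. lra.
  - pose proof (alternated_series_ineq U l m Hd Hc Hl) as [H1 _].
    pose proof (alternated_series_ineq U l (S m) Hd Hc Hl) as [_ H2].
    replace (2 * S m)%nat with (S (2 * m + 1)) in H2 by lia.
    replace (S (2 * m))%nat with (2 * m + 1)%nat in H1 by lia.
    rewrite tech5 in H2.
    replace (tg_alt U (S (2 * m + 1))) with (U (S (2 * m + 1))) in H2
      by (unfold tg_alt; replace (S (2 * m + 1)) with (2 * S m)%nat by lia; rewrite pow_1_even; ring).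
    apply Rabs_le. lra.
Qed.

Lemma inv_cv : Un_cv (fun n => / INR (S n)) 0.
Proof.
  apply is_lim_seq_Reals.
  replace (Finite 0) with (Rbar_inv p_infty) by reflexivity.
  apply is_lim_seq_inv; [|discriminate].
  apply (is_lim_seq_incr_1 INR). apply is_lim_seq_INR.
Qed.

Definition U (c : nat) (t : R) (n : nat) : R := t ^ (2 * n + 1) / (INR (2 * n + 1)) ^ c.

Lemma U_nonneg a t n : 0 <= t <= 1 -> 0 <= U (S a) t n.
Proof.
  intro Ht. unfold U. pose proof (pos_INR (2*n+1)).
  apply Rmult_le_pos. apply pow_le; lra.
  left. apply Rinv_0_lt_compat. apply pow_lt.
  apply lt_0_INR; lia.
Qed.

Lemma U_le a t n : 0 <= t <= 1 -> U (S a) t n <= / INR (S n).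
Proof.
  intro Ht. unfold U.
  assert (X1 : INR (S n) <= INR (2 * n + 1)) by (apply le_INR; lia).
  assert (X0 : 0 < INR (S n)) by (apply lt_0_INR; lia).
  assert (Hp : 1 <= INR (2 * n + 1) ^ a).
  { apply pow_R1_Rle. rewrite plus_INR, mult_INR. simpl. pose proof (pos_INR n). lra. }
  assert (Ht1 : t ^ (2 * n + 1) <= 1).
  { rewrite <- (pow1 (2 * n + 1)). apply pow_incr. lra. }
  assert (Ht0 : 0 <= t ^ (2 * n + 1)) by (apply pow_le; lra).
  change (INR (2 * n + 1) ^ S a) with (INR (2 * n + 1) * INR (2 * n + 1) ^ a). unfold Rdiv.
  apply Rle_trans with (1 * / (INR (2 * n + 1) * INR (2 * n + 1) ^ a)).
  - apply Rmult_le_compat_r; [|exact Ht1]. left. apply Rinv_0_lt_compat. nra.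
  - rewrite Rmult_1_l. apply Rinv_le_contravar; [exact X0|]. nra.
Qed.

Lemma U_dec a t : 0 <= t <= 1 -> Un_decreasing (U (S a) t).
Proof.
  intros Ht n. unfold U.
  assert (Y0 : 1 <= INR (2 * n + 1)) by (rewrite plus_INR, mult_INR; simpl; pose proof (pos_INR n); lra).
  assert (Y1 : INR (2 * n + 1) <= INR (2 * S n + 1)) by (apply le_INR; lia).
  assert (Hp : 0 < INR (2 * n + 1) ^ S a) by (apply pow_lt; lra).
  assert (Hq : INR (2 * n + 1) ^ S a <= INR (2 * S n + 1) ^ S a) by (apply pow_incr; lra).
  assert (Ht1 : t ^ (2 * S n + 1) <= t ^ (2 * n + 1)).
  { replace (2 * S n + 1)%nat with (2 * n + 1 + 2)%nat by lia. rewrite pow_add.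
    assert (0 <= t ^ (2 * n + 1)) by (apply pow_le; lra).
    assert (t ^ 2 <= 1) by (simpl; nra). nra. }
  assert (Ht0 : 0 <= t ^ (2 * S n + 1)) by (apply pow_le; lra).
  unfold Rdiv. apply Rmult_le_compat; try assumption.
  left; apply Rinv_0_lt_compat; lra.
  apply Rinv_le_contravar; assumption.
Qed.

Lemma U_cv a t : 0 <= t <= 1 -> Un_cv (U (S a) t) 0.
Proof.
  intro Ht. apply is_lim_seq_Reals.
  apply is_lim_seq_le_le with (u := fun _ => 0) (w := fun n => / INR (S n)).
  - intro n. split. apply U_nonneg, Ht. apply U_le, Ht.
  - apply is_lim_seq_const.
  - apply is_lim_seq_Reals, inv_cv.
Qed.

Definition Sp (c : nat) (t : R) (n : nat) : R :=
  sum_f_R0 (fun k => (-1) ^ k * t ^ (2 * k + 1) / (INR (2 * k + 1)) ^ c) n.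

Lemma Ti_alt a t : 0 <= t <= 1 ->
  is_series (fun n => (-1) ^ n * t ^ (2 * n + 1) / (INR (2 * n + 1)) ^ (S a)) (Ti (S a) t) /\
  forall n, Rabs (Ti (S a) t - Sp (S a) t n) <= / INR (S (S n)).
Proof.
  intro Ht.
  destruct (alternated_series (U (S a) t) (U_dec a t Ht) (U_cv a t Ht)) as [l Hl].
  assert (Eq : forall n, (-1) ^ n * t ^ (2 * n + 1) / (INR (2 * n + 1)) ^ (S a) = tg_alt (U (S a) t) n).
  { intro n. unfold tg_alt, U, Rdiv. ring. }
  assert (Hs : is_series (fun n => (-1) ^ n * t ^ (2 * n + 1) / (INR (2 * n + 1)) ^ (S a)) l).
  { apply is_series_Reals. intros eps He. destruct (Hl eps He) as [N HN].
    exists N. intros n Hn. rewrite (sum_eq _ (tg_alt (U (S a) t))) by (intros; apply Eq).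
    apply HN, Hn. }
  assert (Tl : Ti (S a) t = l) by (apply is_series_unique, Hs).
  split. rewrite Tl. exact Hs.
  intro n. rewrite Tl. unfold Sp.
  rewrite (sum_eq _ (tg_alt (U (S a) t))) by (intros; apply Eq).
  eapply Rle_trans. apply alt_bound; [apply U_dec, Ht | apply U_cv, Ht | exact Hl].
  apply U_le, Ht.
Qed.

Definition clamp (t : R) : R := (Rabs t - Rabs (t - 1) + 1) / 2.

Lemma clamp_in t : 0 <= clamp t <= 1.
Proof. unfold clamp, Rabs. destruct (Rcase_abs t); destruct (Rcase_abs (t - 1)); lra. Qed.

Lemma clamp_id t : 0 <= t <= 1 -> clamp t = t.
Proof. intro H. unfold clamp, Rabs. destruct (Rcase_abs t); destruct (Rcase_abs (t - 1)); lra. Qed.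

Lemma clamp_cont x : continuous clamp x.
Proof.
  unfold clamp, Rdiv.
  apply (continuous_mult (fun t => Rabs t - Rabs (t - 1) + 1) (fun _ => / 2)); [|apply continuous_const].
  apply (continuous_plus (fun t => Rabs t - Rabs (t - 1)) (fun _ => 1)); [|apply continuous_const].
  apply (continuous_minus (fun t => Rabs t) (fun t => Rabs (t - 1))).
  - apply continuous_Rabs.
  - apply (continuous_Rabs_comp (fun t => t - 1)).
    apply (continuous_minus (fun t => t) (fun _ => 1)); [apply continuous_id|apply continuous_const].
Qed.

Lemma unif_cont (fn : nat -> R -> R) (f : R -> R) x :
  (forall n, continuous (fn n) x) ->
  (forall eps, 0 < eps -> exists N, forall t, Rabs (f t - fn N t) < eps) ->
  continuous f x.
Proof.
  intros Hc Hu. apply filterlim_locally. intro eps.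
  assert (He : 0 < eps / 3) by (destruct eps; simpl; lra).
  destruct (Hu _ He) as [N HN].
  pose proof (proj1 (filterlim_locally _ _) (Hc N) (mkposreal _ He)) as L.
  eapply filter_imp; [|exact L]. intros t Ht. simpl in Ht.
  change (Rabs (f t - f x) < eps). change (Rabs (fn N t - fn N x) < eps / 3) in Ht.
  pose proof (HN t). pose proof (HN x).
  apply Rabs_def2 in H. apply Rabs_def2 in H0. apply Rabs_def2 in Ht.
  destruct eps as [e ep]; simpl in *. apply Rabs_def1; lra.
Qed.

Lemma cpow_cont m x : continuous (fun t => clamp t ^ m) x.
Proof.
  induction m as [|m IH]; simpl.
  - apply continuous_const.
  - apply (continuous_mult clamp (fun t => clamp t ^ m)); [apply clamp_cont | exact IH].
Qed.

Lemma Sp_cont c n x : continuous (fun t => Sp c (clamp t) n) x.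
Proof.
  unfold Sp. induction n as [|n IH]; simpl.
  - unfold Rdiv.
    apply (continuous_mult (fun t => (-1) ^ 0 * clamp t ^ (2 * 0 + 1)) (fun _ => / INR (2 * 0 + 1) ^ c));
      [|apply continuous_const].
    apply (continuous_mult (fun _ => (-1) ^ 0) (fun t => clamp t ^ (2 * 0 + 1)));
      [apply continuous_const | apply cpow_cont].
  - apply (continuous_plus (fun t => sum_f_R0 (fun k => (-1) ^ k * clamp t ^ (2 * k + 1) / INR (2 * k + 1) ^ c) n)
                           (fun t => (-1) ^ S n * clamp t ^ (2 * S n + 1) / INR (2 * S n + 1) ^ c)); [exact IH|].
    unfold Rdiv.
    apply (continuous_mult (fun t => (-1) ^ S n * clamp t ^ (2 * S n + 1)) (fun _ => / INR (2 * S n + 1) ^ c));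
      [|apply continuous_const].
    apply (continuous_mult (fun _ => (-1) ^ S n) (fun t => clamp t ^ (2 * S n + 1)));
      [apply continuous_const | apply cpow_cont].
Qed.

Definition h (c : nat) (t : R) : R := Ti c (clamp t).

Lemma h_cont a x : continuous (h (S a)) x.
Proof.
  apply (unif_cont (fun n t => Sp (S a) (clamp t) n)).
  - intro n. apply Sp_cont.
  - intros eps He. destruct (inv_cv eps He) as [N HN].
    exists N. intro t. unfold h.
    destruct (Ti_alt a (clamp t) (clamp_in t)) as [_ B].
    eapply Rle_lt_trans. apply B.
    specialize (HN (S N) ltac:(lia)). unfold Rdist in HN. rewrite Rminus_0_r in HN.
    rewrite Rabs_pos_eq in HN. exact HN. left. apply Rinv_0_lt_compat, lt_0_INR. lia.
Qed.

Lemma cont_sum (fk : nat -> R -> R) m x :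
  (forall k, continuous (fk k) x) -> continuous (fun y => sum_f_R0 (fun k => fk k y) m) x.
Proof.
  intro H. induction m as [|m IH]; simpl.
  - apply H.
  - apply (continuous_plus (fun y => sum_f_R0 (fun k => fk k y) m) (fk (S m))); [exact IH | apply H].
Qed.

Definition g (j : nat) (t : R) : R := h (2 * j + 1) t * / (1 + clamp t ^ 2).

Lemma g_cont j x : continuous (g j) x.
Proof.
  unfold g. apply (continuous_mult (h (2 * j + 1)) (fun t => / (1 + clamp t ^ 2))).
  - replace (2 * j + 1)%nat with (S (2 * j)) by lia. apply h_cont.
  - apply (continuous_Rinv_comp (fun t => 1 + clamp t ^ 2)).
    + apply (continuous_plus (fun _ => 1) (fun t => clamp t ^ 2)); [apply continuous_const | apply cpow_cont].
    + pose proof (pow2_ge_0 (clamp x)). lra.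
Qed.

Definition Fc (j : nat) (y : R) : R :=
  / 2 * sum_f_R0 (fun k => (-1) ^ k * h (k + 1) y * h (2 * j - k + 1) y) (2 * j).

Lemma Fc_cont j x : continuous (Fc j) x.
Proof.
  unfold Fc.
  apply (continuous_mult (fun _ => / 2)
    (fun y => sum_f_R0 (fun k => (-1) ^ k * h (k + 1) y * h (2 * j - k + 1) y) (2 * j)));
    [apply continuous_const|].
  apply (cont_sum (fun k y => (-1) ^ k * h (k + 1) y * h (2 * j - k + 1) y)).
  intro k.
  apply (continuous_mult (fun y => (-1) ^ k * h (k + 1) y) (h (2 * j - k + 1))).
  - apply (continuous_mult (fun _ => (-1) ^ k) (h (k + 1))); [apply continuous_const|].
    rewrite Nat.add_1_r. apply h_cont.
  - rewrite Nat.add_1_r. apply h_cont.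
Qed.

Lemma cont_zero (H : R -> R) : continuous H 1 -> (forall y, 0 <= y < 1 -> H y = 0) -> H 1 = 0.
Proof.
  intros Hc Hz. destruct (Req_dec (H 1) 0) as [E|Hn]; [exact E|]. exfalso.
  assert (Hp : 0 < Rabs (H 1)) by (apply Rabs_pos_lt, Hn).
  destruct (proj1 (filterlim_locally _ _) Hc (mkposreal _ Hp)) as [del Hd].
  set (y := 1 - Rmin (del / 2) (1 / 2)).
  assert (Hy1 : 0 <= y < 1).
  { unfold y. destruct del as [dl dp]; simpl. pose proof (Rmin_r (dl/2) (1/2)).
    pose proof (Rmin_glb_lt (dl/2) (1/2) 0 ltac:(lra) ltac:(lra)). lra. }
  assert (B : ball 1 del y).
  { change (Rabs (y - 1) < del). unfold y. destruct del as [dl dp]; simpl.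
    pose proof (Rmin_l (dl/2) (1/2)).
    pose proof (Rmin_glb_lt (dl/2) (1/2) 0 ltac:(lra) ltac:(lra)).
    rewrite Rabs_left by lra. lra. }
  specialize (Hd y B). change (Rabs (H y - H 1) < Rabs (H 1)) in Hd.
  rewrite (Hz y Hy1), Rminus_0_l, Rabs_Ropp in Hd. lra.
Qed.

Lemma Ti_0 c : Ti c 0 = 0.
Proof. rewrite Ti_P. ring. Qed.

Lemma Ti_1 c : Ti c 1 = dbeta c.
Proof. unfold Ti, dbeta. apply Series_ext. intro n. rewrite pow1, Rmult_1_r. reflexivity. Qed.

Lemma Fj_0 j : Fj j 0 = 0.
Proof.
  unfold Fj. rewrite (sum_eq _ (fun _ => 0)).
  2:{ intros. rewrite !Ti_0. ring. }
  replace (sum_f_R0 (fun _ : nat => 0) (2 * j)) with 0. ring.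
  induction (2 * j)%nat; simpl; [reflexivity| rewrite <- IHn; ring].
Qed.

Theorem lemma2 (j : nat) :
  is_RInt (fun t : R => Ti (2 * j + 1) t / (1 + t ^ 2)) 0 1
    (/ 2 * sum_f_R0 (fun k : nat => (-1) ^ k * dbeta (k + 1) * dbeta (2 * j - k + 1)) (2 * j)).
Proof.
  set (G := fun y => RInt (g j) 0 y).
  assert (Ex : forall b, ex_RInt (g j) 0 b).
  { intro b. apply (ex_RInt_continuous (V:=R_CompleteNormedModule)). intros; apply g_cont. }
  assert (FFc : forall y, 0 <= y <= 1 -> Fj j y = Fc j y).
  { intros y Hy. unfold Fj, Fc, h. rewrite clamp_id by exact Hy. reflexivity. }
  assert (GF : forall y, 0 <= y < 1 -> G y = Fj j y).
  { intros y Hy. unfold G. apply is_RInt_unique.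
    replace (Fj j y) with (minus (Fj j y) (Fj j 0)).
    2:{ rewrite Fj_0. unfold minus, plus, opp; simpl. ring. }
    apply (is_RInt_derive (V:=R_CompleteNormedModule)).
    - intros x Hx. rewrite Rmin_left in Hx by lra. rewrite Rmax_right in Hx by lra.
      eapply is_derive_val. apply der_F. apply Rabs_def1; lra.
      unfold g, h. rewrite clamp_id by lra. reflexivity.
    - intros; apply g_cont. }
  assert (G1 : G 1 = Fc j 1).
  { apply Rminus_diag_uniq.
    apply (cont_zero (fun y => G y - Fc j y)).
    - apply (continuous_minus G (Fc j)); [|apply Fc_cont].
      apply ex_derive_continuous. eexists. apply (is_derive_RInt (g j) G 0 1).
      + exists (mkposreal 1 Rlt_0_1). intros b _. apply (RInt_correct (V:=R_CompleteNormedModule)), Ex.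
      + apply g_cont.
    - intros y Hy. rewrite GF by exact Hy. rewrite FFc by lra. ring. }
  apply is_RInt_ext with (f := g j).
  { intros x Hx. rewrite Rmin_left in Hx by lra. rewrite Rmax_right in Hx by lra.
    unfold g, h. rewrite clamp_id by lra. reflexivity. }
  replace (/ 2 * sum_f_R0 (fun k : nat => (-1) ^ k * dbeta (k + 1) * dbeta (2 * j - k + 1)) (2 * j))
    with (G 1).
  - apply (RInt_correct (V:=R_CompleteNormedModule)), Ex.
  - rewrite G1, <- FFc by lra. unfold Fj. f_equal. apply sum_eq. intros.
    rewrite !Ti_1. reflexivity.
Qed.
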